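(* Let $\tau>0$, $0\le\lambda<1$, $u_n\in\mathcal V_{[0,1]}$ with $M:=\mathcal M(u_n)$ satisfying $0<M<\mathcal M(\mathbf 1)$. Let $A$ be the set of values of $e^{-\tau\Delta}u_n$ and $a_\alpha:=\sum_{i:(e^{-\tau\Delta}u_n)_i=\alpha}d_i^r$ for $\alpha\in A$. If $\nu\in\mathbb R$ solves \[ M = \sum_{\alpha \in A} a_{\alpha} \begin{cases} 1, & \nu \leq \alpha -(1-\lambda),\\ \frac{\alpha-\nu}{1-\lambda}, & \alpha-(1-\lambda)<\nu < \alpha,\\ 0, &\nu\geq \alpha, \end{cases} \] then $\nu \in [\lambda\min A,\lambda\max A]\subseteq(0,\lambda)$.
   Context: $G=(V,E)$ is a finite, simple, connected, undirected graph with weights $\omega_{ij}=\omega_{ji}>0$ for $ij\in E$, $\omega_{ij}=0$ otherwise; $d_i=\sum_j\omega_{ij}$, $r\in[0,1]$ fixed. $\mathcal V$ = functions $V\to\mathbb R$ with $\langle u,v\rangle_{\mathcal V}=\sum_i u_iv_id_i^r$; $\mathcal V_{[0,1]}$ = functions $V\to[0,1]$. $(\Delta u)_i=d_i^{-r}\sum_j\omega_{ij}(u_i-u_j)$, $e^{-\tau\Delta}$ its matrix exponential. $\mathbf 1$ all-ones; $\mathcal M(u)=\langle u,\mathbf 1\rangle_{\mathcal V}$. *)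

(* Defs.v *)
From HB Require Import structures.
From mathcomp Require Import all_boot all_order all_algebra.
From mathcomp Require Import all_classical all_reals all_analysis.
Set Implicit Arguments. Unset Strict Implicit. Unset Printing Implicit Defensive.
Import Order.TTheory GRing.Theory Num.Theory.
Import numFieldNormedType.Exports.
Local Open Scope ring_scope.

(* A weighted simple connected graph is given by its weight matrix w:
   w i j = w j i, w i j >= 0, w i i = 0 (no loops), edges = {ij | w i j > 0}. *)
Definition weighted_graph (R : realType) (n : nat) (w : 'M[R]_n.+1) : Prop :=
  (forall i j, w i j = w j i) /\ (forall i j, 0 <= w i j) /\ (forall i, w i i = 0).

Definition connected_graph (R : realType) (n : nat) (w : 'M[R]_n.+1) : Prop :=
  forall i j : 'I_n.+1, connect [rel x y | 0 < w x y] i j.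

Definition deg (R : realType) (n : nat) (w : 'M[R]_n.+1) (i : 'I_n.+1) : R :=
  \sum_j w i j.

(* inner product on V: <u,v> = sum_i u_i v_i d_i^r ; mass M(u) = <u,1> *)
Definition mass (R : realType) (n : nat) (w : 'M[R]_n.+1) (r : R)
  (u : 'I_n.+1 -> R) : R :=
  \sum_i u i * (deg w i `^ r).

(* Matrix of the graph Laplacian:
   (Delta u)_i = d_i^{-r} sum_j w_ij (u_i - u_j)
              = sum_j [d_i^{-r} ((i==j) d_i - w_ij)] u_j   (using w_ii = 0). *)
Definition laplacian (R : realType) (n : nat) (w : 'M[R]_n.+1) (r : R)
  : 'M[R]_n.+1 :=
  \matrix_(i, j) ((deg w i `^ r)^-1 * ((i == j)%:R * deg w i - w i j)).

Definition expmx (R : realType) (m : nat) (A : 'M[R]_m) : 'M[R]_m :=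
  \matrix_(i, j) limn (fun N : nat => \sum_(k < N) (A ^+ k) i j / (k`!)%:R).

Definition heat (R : realType) (n : nat) (w : 'M[R]_n.+1) (r tau : R)
  (u : 'I_n.+1 -> R) (i : 'I_n.+1) : R :=
  \sum_j expmx (- (tau *: laplacian w r)) i j * u j.

Definition values (R : realType) (n : nat) (v : 'I_n.+1 -> R) : seq R :=
  undup [seq v i | i <- enum 'I_n.+1].

Definition min_values (R : realType) (n : nat) (v : 'I_n.+1 -> R) : R :=
  \big[Num.min/v ord0]_i v i.
Definition max_values (R : realType) (n : nat) (v : 'I_n.+1 -> R) : R :=
  \big[Num.max/v ord0]_i v i.

Definition a_coef (R : realType) (n : nat) (w : 'M[R]_n.+1) (r : R)
  (v : 'I_n.+1 -> R) (alpha : R) : R :=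
  \sum_(i | v i == alpha) (deg w i `^ r).

Definition clipf (R : realType) (lam alpha nu : R) : R :=
  if nu <= alpha - (1 - lam) then 1
  else if nu < alpha then (alpha - nu) / (1 - lam)
  else 0.

(* Main.v *)
Require Import Defs.
From HB Require Import structures.
From mathcomp Require Import all_boot all_order all_algebra.
From mathcomp Require Import all_classical all_reals all_analysis.
From mathcomp Require Import ring lra.
Import Order.TTheory GRing.Theory Num.Theory.
Import numFieldNormedType.Exports.
Local Open Scope classical_set_scope.
Local Open Scope ring_scope.
Set Implicit Arguments. Unset Strict Implicit. Unset Printing Implicit Defensive.

Section S.
Variable R : realType.

Lemma mxpow_bound n (A : 'M[R]_n.+1) a : (forall i j, `|A i j| <= a) ->
  forall k i j, `|(A ^+ k) i j| <= (n.+1%:R * a) ^+ k.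
Proof.
move=> hA; have a0 : 0 <= a by apply: le_trans (hA ord0 ord0).
elim=> [|k IH] i j.
  by rewrite !expr0 mxE; case: (i == j); rewrite ?normr1 ?normr0.
rewrite exprSr -mulmxE mxE.
apply: le_trans (ler_norm_sum _ _ _) _.
apply: le_trans (_ : \sum_(x < n.+1) (n.+1%:R * a) ^+ k * a <= _).
  apply: ler_sum => x _; rewrite normrM; apply: ler_pM => //.
rewrite sumr_const card_ord -mulr_natl exprSr.
by rewrite le_eqVlt; apply/orP; left; apply/eqP; ring.
Qed.

Definition es n (A : 'M[R]_n.+1) (i j : 'I_n.+1) (N : nat) : R :=
  \sum_(k < N) (A ^+ k) i j / (k`!)%:R.

Lemma es_series n (A : 'M[R]_n.+1) i j :
  es A i j = series (fun k => (A ^+ k) i j / (k`!)%:R).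
Proof. by apply/funext => N; rewrite /es /series /= big_mkord. Qed.

Lemma es_cvg n (A : 'M[R]_n.+1) i j : cvgn (es A i j).
Proof.
rewrite es_series; apply: normed_cvg.
pose a : R := \sum_i \sum_j `|A i j|.
have hA : forall i j, `|A i j| <= a.
  move=> i0 j0; rewrite /a (bigD1 i0) //= (bigD1 j0) //=.
  rewrite -addrA lerDl; apply: addr_ge0; apply: sumr_ge0 => *; first exact: normr_ge0.
  apply: sumr_ge0 => *; exact: normr_ge0.
apply: (@series_le_cvg _ _ (exp_coeff (n.+1%:R * a))).
- by move=> k; exact: normr_ge0.
- move=> k; apply: exp_coeff_ge0; apply: mulr_ge0 => //.
  exact: le_trans (hA ord0 ord0).
- move=> k; rewrite /exp_coeff /= normrM [`|_^-1|]ger0_norm ?invr_ge0 //.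
  by apply: ler_wpM2r; [rewrite invr_ge0|exact: mxpow_bound].
- exact: is_cvg_series_exp_coeff.
Qed.

Definition cT (x y : nat -> R) (N : nat) : R :=
  \sum_(0 <= k < N) \sum_(0 <= i < k.+1) x (k - i)%N * y i.

Lemma cT_rep (x y : nat -> R) N : cT x y N = \sum_(0 <= i < N) y i * \sum_(0 <= j < N - i) x j.
Proof.
elim: N => [|N IH]; first by rewrite /cT !big_geq.
rewrite /cT big_nat_recr //= -/(cT x y N) IH.
transitivity (\sum_(0 <= i < N.+1) (y i * \sum_(0 <= j < N - i) x j + x (N - i)%N * y i)).
  rewrite big_split /= [in RHS]big_nat_recr //=. by rewrite subnn (big_geq (leqnn 0)) mulr0 addr0.
apply: eq_big_nat => i /andP[_ hi]; rewrite subSn // big_nat_recr //= mulrDr.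
by congr (_ + _); rewrite mulrC.
Qed.

Lemma cD_rep (x y : nat -> R) N : (\sum_(0 <= j < N) x j) * (\sum_(0 <= i < N) y i) - cT x y N =
  \sum_(0 <= i < N) y i * \sum_(N - i <= j < N) x j.
Proof.
rewrite cT_rep mulrC big_distrl /= -sumrB; apply: eq_big_nat => i hi.
rewrite -mulrBr (@big_cat_nat _ _ _ (N - i) 0 N _ _ (leq0n _) (leq_subr i N)) /=.
by rewrite addrAC subrr add0r.
Qed.

Lemma cD_bound (x y X Y : nat -> R) N : (forall j, `|x j| <= X j) -> (forall i, `|y i| <= Y i) ->
  `|(\sum_(0 <= j < N) x j) * (\sum_(0 <= i < N) y i) - cT x y N| <=
  (\sum_(0 <= j < N) X j) * (\sum_(0 <= i < N) Y i) - cT X Y N.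
Proof.
move=> hx hy; rewrite !cD_rep.
apply: le_trans (ler_norm_sum _ _ _) _; apply: ler_sum_nat => i hi.
rewrite normrM; apply: ler_pM => //.
apply: le_trans (ler_norm_sum _ _ _) _; apply: ler_sum_nat => j hj; exact: hx.
Qed.

Lemma fact_split (u v : R) k i : (i <= k)%N ->
  u * v *+ 'C(k, i) / (k`!)%:R = (u / ((k - i)`!)%:R) * (v / (i`!)%:R).
Proof.
move=> hi; rewrite -(bin_fact hi) !natrM -mulr_natr.
have h1 : ((i`!)%:R : R) != 0 by rewrite pnatr_eq0 -lt0n fact_gt0.
have h2 : (((k - i)`!)%:R : R) != 0 by rewrite pnatr_eq0 -lt0n fact_gt0.
have h3 : (('C(k, i))%:R : R) != 0 by rewrite pnatr_eq0 -lt0n bin_gt0.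
by field; rewrite h1 h2 h3.
Qed.

Lemma cT_exp p c N : cT (exp_coeff p) (exp_coeff c) N = series (exp_coeff (p + c)) N.
Proof.
rewrite /cT /series /=; apply: eq_big_nat => k _.
rewrite /exp_coeff /= exprDn big_mkord mulr_suml; apply: eq_bigr => i _.
by rewrite fact_split // -ltnS.
Qed.

Lemma cauchy_lim (x y X Y : nat -> R) (lx ly a b : R) :
  series x @ \oo --> lx -> series y @ \oo --> ly ->
  (forall j, `|x j| <= X j) -> (forall i, `|y i| <= Y i) ->
  series X @ \oo --> a -> series Y @ \oo --> b -> cT X Y @ \oo --> a * b ->
  cT x y @ \oo --> lx * ly.
Proof.
move=> cx cy hx hy cX cY cXY.
pose E N := series X N * series Y N - cT X Y N.
pose D N := series x N * series y N - cT x y N.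
have hE : E @ \oo --> 0.
  rewrite -(subrr (a * b)); apply: cvgB => //; exact: cvgM.
have hD : D @ \oo --> 0.
  apply: (@squeeze_cvgr _ _ _ _ (fun N => - E N) E) => //; last first.
    by rewrite -oppr0; apply: cvgN.
  near=> N; rewrite -ler_norml; exact: cD_bound.
have -> : cT x y = (fun N => series x N * series y N - D N).
  by apply/funext => N; rewrite /D; ring.
rewrite -(subr0 (lx * ly)); apply: cvgB => //; exact: cvgM.
Unshelve. all: by end_near.
Qed.

Lemma es_term_bound n (A : 'M[R]_n.+1) i j k :
  `|(A ^+ k) i j / (k`!)%:R| <= exp_coeff (n.+1%:R * \sum_i \sum_j `|A i j|) k.
Proof.
pose a : R := \sum_i \sum_j `|A i j|.
have hA : forall i j, `|A i j| <= a.
  move=> i0 j0; rewrite /a (bigD1 i0) //= (bigD1 j0) //=.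
  rewrite -addrA lerDl; apply: addr_ge0; apply: sumr_ge0 => *; first exact: normr_ge0.
  apply: sumr_ge0 => *; exact: normr_ge0.
rewrite /exp_coeff /= normrM [`|_^-1|]ger0_norm ?invr_ge0 //.
by apply: ler_wpM2r; [rewrite invr_ge0|exact: mxpow_bound].
Qed.

Lemma scal_exp n (s : R) k : (s%:M : 'M[R]_n.+1) ^+ k = (s ^+ k)%:M.
Proof. by rewrite rmorphXn. Qed.

Lemma es_shift_cT n (P : 'M[R]_n.+1) c a b :
  es (P + (-c)%:M) a b = cT (fun j => (P ^+ j) a b / (j`!)%:R) (exp_coeff (-c)).
Proof.
have hc : GRing.comm P (-c)%:M by rewrite /GRing.comm -!mulmxE scalar_mxC.
apply/funext => N; rewrite /es /cT big_mkord; apply: eq_bigr => k _.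
rewrite (exprDn_comm _ hc) summxE big_mkord mulr_suml; apply: eq_bigr => i _.
rewrite mulmxnE scal_exp -mulmxE mul_mx_scalar mxE /exp_coeff /=.
by rewrite [(- c) ^+ i * _]mulrC fact_split // -ltnS.
Qed.

Lemma expmx_shift n (P : 'M[R]_n.+1) c a b : 0 <= c ->
  es (P + (-c)%:M) a b @ \oo --> expmx P a b * expR (-c).
Proof.
move=> c0; rewrite es_shift_cT.
pose p : R := n.+1%:R * \sum_i \sum_j `|P i j|.
apply: (@cauchy_lim _ _ (exp_coeff p) (exp_coeff c) _ _ (expR p) (expR c)).
- rewrite mxE -es_series; exact: es_cvg.
- exact: is_cvg_series_exp_coeff.
- move=> j; exact: es_term_bound.
- move=> i; rewrite /exp_coeff /= normrM normrX normrN ger0_norm //.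
  by rewrite ger0_norm ?invr_ge0.
- exact: is_cvg_series_exp_coeff.
- exact: is_cvg_series_exp_coeff.
- rewrite -expRD; have -> : cT (exp_coeff p) (exp_coeff c) = series (exp_coeff (p + c)).
    by apply/funext => N; rewrite cT_exp.
  exact: is_cvg_series_exp_coeff.
Qed.

Lemma expmx_eq n (P : 'M[R]_n.+1) c a b : 0 <= c ->
  expmx (P + (-c)%:M) a b = expmx P a b * expR (-c).
Proof. by move=> c0; rewrite [LHS]mxE; apply: cvg_lim => //; exact: expmx_shift. Qed.

Lemma cvg_sum_seq (I : Type) (s : seq I) (f : I -> nat -> R) (l : I -> R) :
  (forall j, f j @ \oo --> l j) ->
  (fun N => \sum_(j <- s) f j N) @ \oo --> \sum_(j <- s) l j.
Proof.
move=> hf; elim: s => [|j s IH].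
  rewrite big_nil; under eq_fun do rewrite big_nil; exact: cvg_cst.
rewrite big_cons; under eq_fun do rewrite big_cons.
exact: cvgD.
Qed.

Lemma lim_evconst (g : nat -> R) (l v : R) : g @ \oo --> l ->
  (forall N, g N.+1 = v) -> l = v.
Proof.
move=> hg hv; rewrite -cvg_shiftS in hg.
have : (fun N => g N.+1) = (fun _ => v) by apply/funext => N; exact: hv.
move=> e.
have h1 : limn (fun N => g N.+1) = l by apply: cvg_lim.
have h2 : limn (fun N => g N.+1) = v by rewrite e; apply: cvg_lim => //; exact: cvg_cst.
by rewrite -h1 h2.
Qed.

Lemma pow_nonneg n (P : 'M[R]_n.+1) : (forall i j, 0 <= P i j) ->
  forall k i j, 0 <= (P ^+ k) i j.
Proof.
move=> hP; elim=> [|k IH] i j; first by rewrite expr0 mxE; case: (i == j).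
rewrite exprSr -mulmxE mxE; apply: sumr_ge0 => x _; exact: mulr_ge0.
Qed.

Lemma pow_path n (P : 'M[R]_n.+1) : (forall i j, 0 <= P i j) ->
  forall (e : rel 'I_n.+1), (forall x y, e x y -> 0 < P x y) ->
  forall p a, path e a p -> 0 < (P ^+ (size p)) a (last a p).
Proof.
move=> hP e he; elim=> [|x p IH] a /=.
  by move=> _; rewrite expr0 mxE eqxx.
move=> /andP[hax hp]; rewrite exprS -mulmxE mxE (bigD1 x) //=.
apply: (@lt_le_trans _ _ (P a x * (P ^+ size p) x (last x p))).
  by apply: mulr_gt0; [exact: he | exact: IH].
rewrite lerDl; apply: sumr_ge0 => y _; apply: mulr_ge0 => //; exact: pow_nonneg.
Qed.

Lemma expmx_pos n (P : 'M[R]_n.+1) : (forall i j, 0 <= P i j) ->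
  forall k a b, 0 < (P ^+ k) a b -> 0 < expmx P a b.
Proof.
move=> hP k a b hk; rewrite mxE.
have hnd : {homo es P a b : x y / (x <= y)%N >-> x <= y}.
  move=> x y hxy; rewrite /es -!(big_mkord xpredT (fun k => (P ^+ k) a b / (k`!)%:R)).
  apply: (@nondecreasing_series _ _ xpredT 0) => // m _ _.
  by apply: divr_ge0 => //; exact: pow_nonneg.
apply: (@lt_le_trans _ _ (es P a b k.+1)); last first.
  by apply: (nondecreasing_cvgn_le hnd); exact: es_cvg.
rewrite /es big_ord_recr /=; apply: (@lt_le_trans _ _ ((P ^+ k) a b / (k`!)%:R)).
  by apply: divr_gt0 => //; rewrite ltr0n fact_gt0.
rewrite lerDr; apply: sumr_ge0 => m _; apply: divr_ge0 => //; exact: pow_nonneg.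
Qed.

Lemma rowsum_pow n (L : 'M[R]_n.+1) : (forall x, \sum_j L x j = 0) ->
  forall k i, \sum_j (L ^+ k) i j = (k == 0)%:R.
Proof.
move=> hL; case=> [|k] i.
  rewrite expr0 (bigD1 i) //= mxE eqxx big1 ?addr0 // => j hj.
  by rewrite mxE eq_sym (negbTE hj).
rewrite exprSr -mulmxE /=.
under eq_bigr do rewrite mxE.
rewrite exchange_big /= big1 // => x _; by rewrite -mulr_sumr hL mulr0.
Qed.

Lemma colsum_pow n (L : 'M[R]_n.+1) (q : 'I_n.+1 -> R) :
  (forall x, \sum_i q i * L i x = 0) ->
  forall k j, \sum_i q i * (L ^+ k) i j = (k == 0)%:R * q j.
Proof.
move=> hL; case=> [|k] j.
  rewrite expr0 (bigD1 j) //= mxE eqxx big1 ?addr0 ?mul1r ?mulr1 // => i hi.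
  by rewrite mxE (negbTE hi) mulr0.
rewrite exprS -mulmxE /= mul0r.
under eq_bigr do rewrite mxE mulr_sumr.
rewrite exchange_big /= big1 // => x _.
under eq_bigr do rewrite mulrA.
by rewrite -mulr_suml hL mul0r.
Qed.

Lemma clip_gt (lam h nu : R) : 0 <= lam -> lam < 1 -> 0 < h -> h < 1 ->
  nu < lam * h -> h < clipf lam h nu.
Proof.
move=> l0 l1 h0 h1 hn; rewrite /clipf.
have l1' : 0 < 1 - lam by rewrite subr_gt0.
case: ifP => _ //; case: ifP => hnh.
  by rewrite ltr_pdivlMr //; nra.
exfalso; move: hnh; rewrite (_ : (nu < h) = true) //; apply/idP; nra.
Qed.

Lemma clip_lt (lam h nu : R) : 0 <= lam -> lam < 1 -> 0 < h -> h < 1 ->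
  lam * h < nu -> clipf lam h nu < h.
Proof.
move=> l0 l1 h0 h1 hn; rewrite /clipf.
have l1' : 0 < 1 - lam by rewrite subr_gt0.
case: ifP => hle.
  exfalso; nra.
case: ifP => hnh //.
by rewrite ltr_pdivrMr //; nra.
Qed.

Lemma bigmin_le_seq n (s : seq 'I_n.+1) x0 (f : 'I_n.+1 -> R) i : i \in s ->
  \big[Num.min/x0]_(j <- s) f j <= f i.
Proof.
elim: s => // a s IH; rewrite in_cons big_cons => /orP[/eqP->|his].
  by rewrite ge_min lexx.
by rewrite ge_min IH ?orbT.
Qed.

Lemma bigmax_ge_seq n (s : seq 'I_n.+1) x0 (f : 'I_n.+1 -> R) i : i \in s ->
  f i <= \big[Num.max/x0]_(j <- s) f j.
Proof.
elim: s => // a s IH; rewrite in_cons big_cons => /orP[/eqP->|his].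
  by rewrite le_max lexx.
by rewrite le_max IH ?orbT.
Qed.

Lemma min_le n (v : 'I_n.+1 -> R) i : min_values v <= v i.
Proof. by apply: bigmin_le_seq; rewrite mem_index_enum. Qed.

Lemma max_ge n (v : 'I_n.+1 -> R) i : v i <= max_values v.
Proof. by apply: bigmax_ge_seq; rewrite mem_index_enum. Qed.

Lemma min_pos n (v : 'I_n.+1 -> R) : (forall i, 0 < v i) -> 0 < min_values v.
Proof.
move=> hv; rewrite /min_values; apply: (big_ind (fun x => 0 < x)) => //.
by move=> x y hx hy; rewrite lt_min hx hy.
Qed.

Lemma max_lt1 n (v : 'I_n.+1 -> R) : (forall i, v i < 1) -> max_values v < 1.
Proof.
move=> hv; rewrite /max_values; apply: (big_ind (fun x => x < 1)) => //.
by move=> x y hx hy; rewrite gt_max hx hy.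
Qed.

Lemma part_sum n (h q : 'I_n.+1 -> R) (f : R -> R) :
  \sum_(alpha <- values h) (\sum_(i | h i == alpha) q i) * f alpha =
  \sum_i q i * f (h i).
Proof.
rewrite /values; set s := undup _.
transitivity (\sum_(alpha <- s) \sum_i (if h i == alpha then q i * f (h i) else 0)).
  apply: eq_bigr => alpha _; rewrite big_mkcond mulr_suml; apply: eq_bigr => i _.
  by case: eqP => [<-|_]; rewrite ?mul0r.
rewrite exchange_big; apply: eq_bigr => i _.
rewrite (bigD1_seq (h i)) /= ?undup_uniq ?mem_undup ?map_f ?mem_enum // eqxx.
rewrite big1 ?addr0 // => alpha hne; by rewrite eq_sym (negbTE hne).
Qed.

Lemma pos_sum n (q g : 'I_n.+1 -> R) i0 : (forall i, 0 <= q i) -> 0 < q i0 ->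
  (forall i, 0 < g i) -> 0 < \sum_i q i * g i.
Proof.
move=> hq hq0 hg; rewrite (bigD1 i0) //=.
apply: (lt_le_trans (mulr_gt0 hq0 (hg i0))); rewrite lerDl.
by apply: sumr_ge0 => i _; apply: mulr_ge0 => //; exact: ltW.
Qed.
End S.

Theorem proposition28 (R : realType) (n : nat) (w : 'M[R]_n.+1) (r tau lam nu : R)
  (u : 'I_n.+1 -> R) :
  weighted_graph w -> connected_graph w ->
  0 <= r <= 1 ->
  0 < tau -> 0 <= lam < 1 ->
  (forall i, 0 <= u i <= 1) ->
  0 < mass w r u < mass w r (fun _ => 1) ->
  mass w r u =
    \sum_(alpha <- values (heat w r tau u))
       a_coef w r (heat w r tau u) alpha * clipf lam alpha nu ->
  (lam * min_values (heat w r tau u) <= nu <= lam * max_values (heat w r tau u)) /\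
  (0 < lam ->
     forall x, lam * min_values (heat w r tau u) <= x
               <= lam * max_values (heat w r tau u) -> 0 < x < lam).
Proof.
move=> [wsym [wge0 w0]] hconn hr htau /andP[lam0 lam1] hu /andP[m0 m1] hM.
pose q i := deg w i `^ r.
pose L := - (tau *: laplacian w r).
have hd0 : forall i, 0 <= deg w i by move=> i; apply: sumr_ge0.
have hq0 : forall i, 0 <= q i by move=> i; exact: powR_ge0.
have hLe : forall i j, L i j = - (tau * ((q i)^-1 * ((i == j)%:R * deg w i - w i j))).
  by move=> i j; rewrite !mxE.
have hrow : forall x, \sum_j L x j = 0.
  move=> x; under eq_bigr do rewrite hLe.
  rewrite sumrN -mulr_sumr -mulr_sumr sumrB (bigD1 x) //= eqxx mul1r big1 ?addr0.
    by rewrite /deg subrr !mulr0 oppr0.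
  by move=> j hj; rewrite eq_sym (negbTE hj) mul0r.
have hcol : forall x, \sum_i q i * L i x = 0.
  move=> x.
  have key : forall i, q i * L i x = - (tau * ((i == x)%:R * deg w i - w i x)).
    move=> i; rewrite hLe; case: (eqVneq (q i) 0) => hqi.
      have di0 : deg w i = 0.
        by move/eqP: hqi; rewrite /q powR_eq0 => /andP[/eqP -> _].
      have wi0 : w i x = 0.
        by move: di0; rewrite /deg => di0; apply: (psumr_eq0P _ di0) => // j _; exact: wge0.
      by rewrite hqi di0 wi0 mulr0 subrr !mulr0 oppr0 mul0r.
    by rewrite mulrN; congr (- _); rewrite mulrCA [q i * _]mulrA mulfV // mul1r.
  under eq_bigr do rewrite key.
  rewrite sumrN -mulr_sumr sumrB (bigD1 x) //= eqxx mul1r big1 ?addr0.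
    rewrite (eq_bigr (fun i => w x i)); last by move=> i _; rewrite wsym.
    by rewrite -/(deg w x) subrr mulr0 oppr0.
  by move=> j hj; rewrite (negbTE hj) mul0r.
pose c := \sum_i tau * ((q i)^-1 * deg w i).
have c0 : 0 <= c.
  apply: sumr_ge0 => i _; apply: mulr_ge0; first exact: ltW.
  by apply: mulr_ge0 => //; rewrite invr_ge0.
pose P := L + c%:M.
have hLP : L = P + (-c)%:M by rewrite /P -addrA -raddfD /= subrr raddf0 addr0.
have hPe : forall i j, P i j = L i j + c *+ (i == j) by move=> i j; rewrite /P !mxE.
have hP0 : forall i j, 0 <= P i j.
  move=> i j; rewrite hPe hLe; case: (eqVneq i j) => [<-|hij].
    rewrite w0 subr0 mul1r mulr1n addrC subr_ge0 /c (bigD1 i) //= lerDl.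
    apply: sumr_ge0 => k _; apply: mulr_ge0; first exact: ltW.
    by apply: mulr_ge0 => //; rewrite invr_ge0.
  rewrite mulr0n addr0 mul0r sub0r !mulrN opprK.
  apply: mulr_ge0; first exact: ltW.
  by apply: mulr_ge0 => //; rewrite invr_ge0.
have hPpos : forall x y, 0 < w x y -> 0 < P x y.
  move=> x y hxy; have hxy' : x != y.
    by apply/eqP => e; move: hxy; rewrite e w0 ltxx.
  rewrite hPe hLe (negbTE hxy') mulr0n addr0 mul0r sub0r !mulrN opprK.
  have dpos : 0 < deg w x.
    apply: (lt_le_trans hxy); rewrite /deg (bigD1 y) //= lerDl.
    by apply: sumr_ge0 => k _.
  apply: mulr_gt0 => //; apply: mulr_gt0 => //.
  by rewrite invr_gt0 powR_gt0.
have hKpos : forall a b, 0 < expmx L a b.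
  move=> a b; rewrite hLP expmx_eq // mulr_gt0 ?expR_gt0 //.
  have /connectP [p hp ->] := hconn a b.
  apply: (expmx_pos hP0 (k := size p)).
  by apply: (pow_path hP0 (e := [rel x y | 0 < w x y])).
have hKcvg : forall a b, es L a b @ \oo --> expmx L a b.
  by move=> a b; rewrite hLP expmx_eq //; exact: expmx_shift.
have hKrow : forall i, \sum_j expmx L i j = 1.
  move=> i; apply: (lim_evconst (cvg_sum_seq (s := index_enum _) (fun j => hKcvg i j))).
  move=> N; rewrite /es exchange_big /=.
  under eq_bigr do rewrite -mulr_suml (rowsum_pow hrow).
  rewrite big_ord_recl /= fact0 divr1 big1 ?addr0 // => k _.
  by rewrite mul0r.
have hKcol : forall j, \sum_i q i * expmx L i j = q j.
  move=> j; apply: (lim_evconst (g := fun N => \sum_(i <- index_enum _) q i * es L i j N)).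
    by apply: cvg_sum_seq => i; apply: cvgMl_tmp.
  move=> N; rewrite /es.
  under eq_bigr do rewrite mulr_sumr.
  rewrite exchange_big /=.
  under eq_bigr do (under eq_bigr do rewrite mulrA; rewrite -mulr_suml (colsum_pow hcol)).
  rewrite big_ord_recl /= fact0 divr1 mul1r big1 ?addr0 // => k _.
  by rewrite mul0r mul0r.
set h := heat w r tau u.
have hh0 : forall i, 0 < h i.
  have [j0 hj0] : exists j, 0 < u j.
    case: (pickP (fun j => 0 < u j)) => [j hj|hn]; first by exists j.
    exfalso; move: m0; rewrite /mass big1 ?ltxx // => i _.
    move: (hu i) => /andP[ui0 _]; move: ui0; rewrite le_eqVlt hn orbF => /eqP <-.
    by rewrite mul0r.
  move=> i; rewrite /h /heat (bigD1 j0) //=.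
  apply: (lt_le_trans (mulr_gt0 (hKpos i j0) hj0)); rewrite lerDl.
  apply: sumr_ge0 => j _; apply: mulr_ge0; first exact: ltW.
  by case/andP: (hu j).
have hh1 : forall i, h i < 1.
  have [j1 hj1] : exists j, u j < 1.
    case: (pickP (fun j => u j < 1)) => [j hj|hn]; first by exists j.
    exfalso; move: m1; rewrite (_ : mass w r u = mass w r (fun _ => 1)) ?ltxx //.
    rewrite /mass; apply: eq_bigr => i _; congr (_ * _).
    move: (hu i) => /andP[_ ui1]; move: ui1; rewrite le_eqVlt hn orbF => /eqP //.
  move=> i; rewrite -subr_gt0 -(hKrow i) /h /heat -sumrB.
  under eq_bigr do rewrite -{1}(mulr1 (expmx _ _ _)) -mulrBr.
  rewrite (bigD1 j1) //=.
  apply: (@lt_le_trans _ _ (expmx L i j1 * (1 - u j1))).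
    by apply: mulr_gt0 => //; rewrite subr_gt0.
  rewrite lerDl; apply: sumr_ge0 => j _; apply: mulr_ge0; first exact: ltW.
  by case/andP: (hu j) => _ ?; rewrite subr_ge0.
have hmass : mass w r u = \sum_i q i * h i.
  rewrite /h /heat; under [RHS]eq_bigr do rewrite mulr_sumr.
  rewrite exchange_big /= /mass; apply: eq_bigr => j _.
  under eq_bigr do rewrite mulrA.
  by rewrite -mulr_suml hKcol mulrC.
have hM' : mass w r u = \sum_i q i * clipf lam (h i) nu.
  by rewrite hM /a_coef (part_sum h q (fun a => clipf lam a nu)).
have hg : \sum_i q i * (clipf lam (h i) nu - h i) = 0.
  under eq_bigr do rewrite mulrBr.
  by rewrite sumrB -hM' -hmass subrr.
have [i0 hi0] : exists i, 0 < q i.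
  case: (pickP (fun i => 0 < q i)) => [i hi|hn]; first by exists i.
  exfalso; have hm1 : mass w r (fun _ => 1) = 0.
    rewrite /mass big1 // => i _.
    have := hq0 i; rewrite le_eqVlt hn orbF /q => /eqP <-.
    by rewrite mulr0.
  by move: (lt_trans m0 m1); rewrite hm1 ltxx.
have hmin := min_pos hh0; have hmax := max_lt1 hh1.
split.
  apply/andP; split.
    rewrite leNgt; apply/negP => hlt.
    have : 0 < \sum_i q i * (clipf lam (h i) nu - h i).
      apply: (pos_sum hq0 hi0) => i; rewrite subr_gt0; apply: clip_gt => //.
      apply: (lt_le_trans hlt); apply: ler_wpM2l => //; exact: min_le.
    by rewrite hg ltxx.
  rewrite leNgt; apply/negP => hlt.
  have : 0 < \sum_i q i * (h i - clipf lam (h i) nu).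
    apply: (pos_sum hq0 hi0) => i; rewrite subr_gt0; apply: clip_lt => //.
    apply: (le_lt_trans _ hlt); apply: ler_wpM2l => //; exact: max_ge.
  under eq_bigr do rewrite -opprB mulrN.
  by rewrite sumrN hg oppr0 ltxx.
move=> lpos x /andP[hx1 hx2]; apply/andP; split.
  exact: (lt_le_trans (mulr_gt0 lpos hmin) hx1).
apply: (le_lt_trans hx2); rewrite -[X in _ < X](mulr1 lam) ltr_pM2l //.
Qed.
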